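(* For all $n\ge0$, all $0\le k\le n$ and all complex $a,b,c_0,c_\infty$, $$E_{n,k}(a,b;c_0,c_\infty)=\sum_{j=k}^n(-1)^{j-k}\binom jk(c_0+c_\infty)^{\overline{n-j},b}\,S_{n,n-j}(-a,b;c_\infty),$$ $$(c_0+c_\infty)^{\overline{n-k},b}\,S_{n,n-k}(-a,b;c_\infty)=\sum_{j=k}^n\binom jk E_{n,j}(a,b;c_0,c_\infty).$$
   Context: GKP triangle $\left[\begin{array}{cc|c}\alpha,&\beta&\gamma\\ \alpha',&\beta'&\gamma'\end{array}\right]_{n,k}$: defined by $T_{0,0}=1$, $T_{n,k}=0$ if $n<0$, $k<0$ or $k>n$, and $T_{n+1,k+1}=[\alpha n+\beta(k+1)+\gamma]T_{n,k+1}+[\alpha' n+\beta' k+\gamma']T_{n,k}$ for $n\ge0$, $k\in\mathbb Z$. Hsu–Shiue Stirling numbers: $S_{n,k}(a,b;r):=\left[\begin{array}{cc|c}-a,&b&r\\ 0,&0&1\end{array}\right]_{n,k}$. Generalized Eulerian numbers: $E_{n,k}(a,b;c_0,c_\infty):=\left[\begin{array}{cc|c}-a,&b&c_0\\ a+b,&-b&c_\infty\end{array}\right]_{n,k}$, i.e. $E_{n+1,k+1}=[-an+b(k+1)+c_0]E_{n,k+1}+[(a+b)n-bk+c_\infty]E_{n,k}$. $(x)^{\overline n,b}=\prod_{i=0}^{n-1}(x+ib)$, $(x)^{\underline n,a}=\prod_{i=0}^{n-1}(x-ia)$. *)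

(* Defs.v *)
From HB Require Import structures.
From mathcomp Require Import all_boot all_order all_algebra.
From mathcomp Require Import complex.
From mathcomp Require Import Rstruct.
From Stdlib Require Import Reals.
Set Implicit Arguments. Unset Strict Implicit. Unset Printing Implicit Defensive.
Import Order.TTheory GRing.Theory Num.Theory.
Local Open Scope ring_scope.

Notation C := (complex Rdefinitions.R).

(* GKP triangle [alpha, beta | gamma ; alpha', beta' | gamma']_{n,k}, for k : nat. *)
Fixpoint gkp (al be ga al' be' ga' : C) (n k : nat) : C :=
  match n with
  | 0%N => (k == 0%N)%:R
  | n'.+1 =>
      (al * n'%:R + be * k%:R + ga) * gkp al be ga al' be' ga' n' k
      + match k with
        | 0%N => 0
        | k'.+1 => (al' * n'%:R + be' * k'%:R + ga') * gkp al be ga al' be' ga' n' k'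
        end
  end.

Definition hsS (a b r : C) (n k : nat) : C := gkp (- a) b r 0 0 1 n k.

Definition genE (a b c0 cinf : C) (n k : nat) : C := gkp (- a) b c0 (a + b) (- b) cinf n k.

Definition risef (x b : C) (n : nat) : C := \prod_(i < n) (x + i%:R * b).

(* Main.v *)
Require Import Defs.
From HB Require Import structures.
From mathcomp Require Import all_boot all_order all_algebra.
From mathcomp Require Import complex Rstruct.
From mathcomp Require Import ring zify.
Import GRing.Theory.
Local Open Scope ring_scope.

Lemma gkp_small al be ga al' be' ga' n k : (n < k)%N ->
  gkp al be ga al' be' ga' n k = 0.
Proof.
elim: n k => [|n IH] [|k] //= Hk.
by rewrite (IH k.+1) ?(IH k) ?mulr0 ?addr0 //; exact: ltnW.
Qed.

Lemma E_succ a b c0 cinf n j : genE a b c0 cinf n.+1 j =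
  (- a * n%:R + b * j%:R + c0) * genE a b c0 cinf n j +
  (if j is i.+1 then ((a + b) * n%:R + - b * i%:R + cinf) * genE a b c0 cinf n i else 0).
Proof. by case: j. Qed.

Lemma S_succ a b cinf n t : hsS (- a) b cinf n.+1 t =
  (a * n%:R + b * t%:R + cinf) * hsS (- a) b cinf n t +
  (if t is t'.+1 then hsS (- a) b cinf n t' else 0).
Proof. by case: t => [|t] /=; rewrite /hsS /= opprK ?mul0r ?add0r ?mul1r ?addr0. Qed.

Lemma R_succ c b t : risef c b t.+1 = risef c b t * (c + t%:R * b).
Proof. by rewrite /risef big_ord_recr. Qed.

Lemma R_0 c b : risef c b 0 = 1.
Proof. by rewrite /risef big_ord0. Qed.

Definition Gs a b c0 cinf n m :=
  \sum_(0 <= j < n.+1) ('C(j, m))%:R * genE a b c0 cinf n j.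

Lemma bin_id (i m' : nat) :
  (m'.+1)%:R * ('C(i, m'.+1))%:R = (i%:R - m'%:R) * ('C(i, m'))%:R :> C.
Proof.
case: (ltnP i m') => h.
  by rewrite !bin_small ?mulr0 // ltnW.
by rewrite -natrB // -!natrM mul_bin_left.
Qed.

Lemma G_rec a b c0 cinf n m :
  Gs a b c0 cinf n.+1 m = (b * (n%:R - m%:R) + (c0 + cinf)) * Gs a b c0 cinf n m
   + (if m is m'.+1 then ((a + b) * n%:R - b * m'%:R + cinf) * Gs a b c0 cinf n m' else 0).
Proof.
rewrite /Gs.
under eq_bigr do rewrite E_succ mulrDr.
rewrite big_split /= big_nat_recr //= {2}/genE gkp_small // mulr0 mulr0 addr0.
rewrite [\sum_(0 <= i < n.+2) _]big_nat_recl //= mulr0 add0r.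
rewrite mulr_sumr -big_split /=.
case: m => [|m'].
  rewrite addr0; apply: eq_bigr => i _; rewrite !bin0; ring.
rewrite mulr_sumr -big_split /=; apply: eq_bigr => i _.
rewrite binS natrD.
have h := bin_id i m'.
set E := genE _ _ _ _ _ _.
apply/eqP; rewrite -subr_eq0; apply/eqP.
transitivity (b * E * ((m'.+1)%:R * ('C(i, m'.+1))%:R - (i%:R - m'%:R) * ('C(i, m'))%:R)).
  ring.
by rewrite h subrr mulr0.
Qed.
Lemma G_top a b c0 cinf n : Gs a b c0 cinf n n.+1 = 0.
Proof.
rewrite /Gs big1_seq // => j; rewrite mem_index_iota => /andP[_ jn].
by rewrite bin_small ?mul0r.
Qed.

Lemma G_closed a b c0 cinf n m : (m <= n)%N ->
  Gs a b c0 cinf n m = risef (c0 + cinf) b (n - m) * hsS (- a) b cinf n (n - m).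
Proof.
elim: n m => [|n IH] m.
  by rewrite leqn0 => /eqP ->; rewrite /Gs big_nat1 R_0 /hsS /genE /= bin0 !mulr1.
move=> hm; rewrite G_rec; case: m hm => [|m'] hm.
  rewrite IH // !subn0 S_succ R_succ [hsS _ _ _ n n.+1]/hsS gkp_small // addr0.
  set S := hsS _ _ _ n n. set R := risef _ _ n.
  ring.
rewrite subSS (IH m') //.
move: hm; rewrite ltnS leq_eqVlt => /orP[/eqP -> | hm].
  rewrite G_top subnn S_succ /= R_0; ring.
rewrite IH // -(subnSK hm) S_succ R_succ.
have hn : n%:R = ((n - m'.+1) + m'.+1)%:R :> C by rewrite subnK.
set t := (n - m'.+1)%N.
set S1 := hsS _ _ _ n t.+1. set S0 := hsS _ _ _ n t. set R := risef _ _ t.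
rewrite hn !natrD; ring.
Qed.

Lemma bin_mul k t i : (k <= i)%N -> ('C(t + k, k) * 'C(i, t + k) = 'C(i, k) * 'C(i - k, t))%N.
Proof.
move=> ki.
case: (leqP (t + k) i) => h; last first.
  by rewrite (bin_small h) (@bin_small (i - k)) ?muln0 // ltn_subLR // addnC.
apply/eqP; rewrite -(eqn_pmul2r (_ : 0 < k`! * t`! * (i - (t + k))`!)%N); last first.
  by rewrite !muln_gt0 !fact_gt0.
have H1 := bin_fact (leq_addl t k). rewrite addnK in H1.
have H2 := bin_fact h.
have H3 := bin_fact ki.
have tik : (t <= i - k)%N by rewrite leq_subRL // addnC.
have H4 := bin_fact tik.
rewrite -subnDA addnC in H4.
apply/eqP.
transitivity ('C(i, t + k) * (('C(t + k, k) * (k`! * t`!)) * (i - (t + k))`!))%N.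
  ring.
rewrite H1 H2 -H3.
transitivity ('C(i, k) * (k`! * ('C(i - k, t) * (t`! * (i - (t + k))`!))))%N; last by ring.
by rewrite H4.
Qed.

Lemma alt_sum m : \sum_(0 <= t < m.+1) (-1) ^+ t * ('C(m, t))%:R = (m == 0%N)%:R :> C.
Proof.
have := exprDn (1 : C) (-1) m; rewrite addrN expr0n => ->.
rewrite big_mkord; apply: eq_bigr => t _; by rewrite expr1n mul1r mulr_natr.
Qed.

Lemma inner i k N : (i < N)%N ->
  \sum_(0 <= j < N) (-1) ^+ (j - k) * ('C(j, k))%:R * ('C(i, j))%:R = (i == k)%:R :> C.
Proof.
move=> iN; case: (ltnP i k) => ik.
  rewrite (ltn_eqF ik) big1_seq // => j _.
  case: (ltnP j k) => jk; first by rewrite bin_small // mulr0 mul0r.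
  by rewrite (@bin_small i j) ?mulr0 // (leq_trans ik jk).
have kN : (k <= N)%N := leq_trans ik (ltnW iN).
rewrite (big_cat_nat (leq0n k) kN) /= big1_seq ?add0r; last first.
  by move=> j; rewrite mem_index_iota => /andP[_ jk]; rewrite bin_small // mulr0 mul0r.
rewrite -{1}[k]add0n big_addn.
transitivity (\sum_(0 <= j < N - k) ('C(i, k))%:R * ((-1) ^+ j * ('C(i - k, j))%:R) : C).
  apply: eq_bigr => j _; rewrite addnK -mulrA -natrM bin_mul // natrM; ring.
rewrite -mulr_sumr.
have ikN : ((i - k).+1 <= N - k)%N by lia.
rewrite (big_cat_nat (leq0n _) ikN) /= [X in _ + X]big1_seq ?addr0; last first.
  move=> j /andP[_]; rewrite mem_index_iota => /andP[hj _]; by rewrite bin_small ?mulr0n ?mulr0.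
transitivity (('C(i, k))%:R * ((i - k)%N == 0%N)%:R : C).
  by congr (_ * _); apply: alt_sum.
rewrite subn_eq0.
case: (eqVneq i k) => [->|ne]; first by rewrite binn leqnn mul1r.
by rewrite leqNgt ltn_neqAle eq_sym ne ik /= mulr0.
Qed.

Lemma inversion (f : nat -> C) n k : (k <= n)%N ->
  \sum_(0 <= j < n.+1) (-1) ^+ (j - k) * ('C(j, k))%:R *
     (\sum_(0 <= i < n.+1) ('C(i, j))%:R * f i) = f k.
Proof.
move=> kn.
under eq_bigr do rewrite mulr_sumr.
rewrite exchange_big /=.
transitivity (\sum_(0 <= i < n.+1) f i * (i == k)%:R).
  apply: eq_big_nat => i /andP[_ iN].
  rewrite -(inner i k n.+1 iN) mulr_sumr; apply: eq_bigr => j _; ring.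
rewrite (bigD1_seq k) ?mem_index_iota ?iota_uniq //= eqxx mulr1 big1 ?addr0 //.
by move=> i /negPf ->; rewrite mulr0.
Qed.

Theorem mainTheorem9 (n k : nat) (a b c0 cinf : C) : (k <= n)%N ->
  genE a b c0 cinf n k =
    \sum_(k <= j < n.+1)
      (-1) ^+ (j - k) * ('C(j, k))%:R * risef (c0 + cinf) b (n - j)
        * hsS (- a) b cinf n (n - j)
  /\
  risef (c0 + cinf) b (n - k) * hsS (- a) b cinf n (n - k) =
    \sum_(k <= j < n.+1) ('C(j, k))%:R * genE a b c0 cinf n j.
Proof.
move=> kn.
have Gk j : (j <= n)%N -> risef (c0 + cinf) b (n - j) * hsS (- a) b cinf n (n - j)
   = Gs a b c0 cinf n j by move=> ?; rewrite G_closed.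
have ext (F : nat -> C) : (forall j, (j < k)%N -> F j = 0) ->
    \sum_(k <= j < n.+1) F j = \sum_(0 <= j < n.+1) F j.
  move=> H; rewrite [RHS](big_cat_nat (leq0n k) (leqW kn)) /= [X in _ = X + _]big1_seq ?add0r //.
  by move=> j /andP[_]; rewrite mem_index_iota => /andP[_ jk]; exact: H.
split; last first.
  rewrite Gk // ext; first by [].
  by move=> j jk; rewrite bin_small ?mul0r.
rewrite (eq_big_nat _ _ (F2 := fun j => (-1) ^+ (j - k) * ('C(j, k))%:R * Gs a b c0 cinf n j)); last first.
  by move=> j /andP[_ jn]; rewrite -mulrA Gk.
rewrite ext; last by move=> j jk; rewrite bin_small ?mulr0 ?mul0r.
by rewrite /Gs inversion.
Qed.
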